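(* Let $\kappa$ be a regular uncountable cardinal, let $\tau$ be a cardinal with $1 < \tau < \kappa$ and $\kappa^\tau = \kappa$, and let $J$ be a $\kappa$-complete ideal on $\kappa$ with $NS_\kappa \subseteq J$. Suppose that $\clubsuit_\kappa^{-/\tau}[J]$ holds. Then $\clubsuit_\kappa[J]$ holds.
   Context: An ideal on $\kappa$ is a nonempty $J \subseteq P(\kappa)$ with $\kappa \notin J$, every bounded subset of $\kappa$ in $J$, $J$ closed under subsets and under unions of two members; $J^+ = P(\kappa)\setminus J$; $\kappa$-complete means closed under unions of fewer than $\kappa$ members. $NS_\kappa$ is the nonstationary ideal; $[\kappa]^\kappa$ is the set of size-$\kappa$ subsets of $\kappa$; $acc(\kappa)$ is the set of nonzero limit ordinals below $\kappa$. $\clubsuit_\kappa^{-/\tau}[J]$: there are $B^i_\delta \subseteq \delta$ with $\sup B^i_\delta = \delta$ for $\delta \in acc(\kappa)$, $i < \tau$, such that $\{\delta \in acc(\kappa) : \exists i < \tau\,(B^i_\delta \subseteq W)\} \in J^+$ for every $W \in [\kappa]^\kappa$. $\clubsuit_\kappa[J]$: there are $s_\alpha \subseteq \alpha$ with $\sup s_\alpha = \alpha$ for $\alpha \in acc(\kappa)$ such that $\{\alpha \in acc(\kappa) : s_\alpha \subseteq A\} \in J^+$ for all $A \in [\kappa]^\kappa$. *)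

(* Defs.v *)
(* A cardinal kappa is modelled as a type T carrying a strict
   well-order lt whose proper initial segments all have cardinality < |T|
   (i.e. T with lt is (isomorphic to) the initial ordinal kappa). *)
From Stdlib Require Import Classical.

Set Implicit Arguments.

Definition card_le (A B : Type) : Prop :=
  exists f : A -> B, forall x y, f x = f y -> x = y.
Definition card_lt (A B : Type) : Prop := card_le A B /\ ~ card_le B A.
Definition card_eq (A B : Type) : Prop :=
  exists f : A -> B, (forall x y, f x = f y -> x = y) /\ (forall y, exists x, f x = y).

Section Ordinals.
Variable T : Type.
Variable lt : T -> T -> Prop.

Definition strict_wellorder : Prop :=
  (forall x y z, lt x y -> lt y z -> lt x z) /\
  (forall x y, lt x y \/ x = y \/ lt y x) /\
  well_founded lt.

Definition is_cardinal_order : Prop :=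
  strict_wellorder /\ forall a : T, card_lt {x : T | lt x a} T.

Definition le (x y : T) : Prop := lt x y \/ x = y.

Definition bounded (X : T -> Prop) : Prop := exists a, forall x, X x -> lt x a.

Definition regular : Prop :=
  forall X : T -> Prop, card_lt {x : T | X x} T -> bounded X.

Definition uncountable : Prop := ~ card_le T nat.

Definition acc (d : T) : Prop :=
  (exists b, lt b d) /\ (forall b, lt b d -> exists g, lt b g /\ lt g d).

Definition sub_cofinal (B : T -> Prop) (d : T) : Prop :=
  (forall x, B x -> lt x d) /\ (forall b, lt b d -> exists g, B g /\ le b g).

Definition unbounded (C : T -> Prop) : Prop := forall a, exists b, C b /\ le a b.

Definition closed (C : T -> Prop) : Prop :=
  forall d, acc d -> (forall b, lt b d -> exists g, C g /\ le b g /\ lt g d) -> C d.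

Definition club (C : T -> Prop) : Prop := closed C /\ unbounded C.

Definition nonstationary (A : T -> Prop) : Prop :=
  exists C, club C /\ forall x, C x -> ~ A x.

Definition size_kappa (W : T -> Prop) : Prop := card_eq {x : T | W x} T.

Definition subset (A B : T -> Prop) : Prop := forall x, A x -> B x.

Definition ideal (J : (T -> Prop) -> Prop) : Prop :=
  (exists A, J A) /\
  ~ J (fun _ => True) /\
  (forall A, bounded A -> J A) /\
  (forall A B, J B -> subset A B -> J A) /\
  (forall A B, J A -> J B -> J (fun x => A x \/ B x)).

Definition kappa_complete (J : (T -> Prop) -> Prop) : Prop :=
  forall (I : Type) (F : I -> T -> Prop),
    card_lt I T -> (forall i, J (F i)) -> J (fun x => exists i, F i x).

Definition NS_subset (J : (T -> Prop) -> Prop) : Prop :=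
  forall A, nonstationary A -> J A.

Definition J_positive (J : (T -> Prop) -> Prop) (A : T -> Prop) : Prop := ~ J A.

(* clubsuit^{-/tau}_kappa [J], with tau represented by the index type S *)
Definition clubsuit_minus (S : Type) (J : (T -> Prop) -> Prop) : Prop :=
  exists B : T -> S -> T -> Prop,
    (forall d i, acc d -> sub_cofinal (B d i) d) /\
    forall W, size_kappa W ->
      J_positive J (fun d => acc d /\ exists i, subset (B d i) W).

Definition clubsuit (J : (T -> Prop) -> Prop) : Prop :=
  exists s : T -> T -> Prop,
    (forall a, acc a -> sub_cofinal (s a) a) /\
    forall A, size_kappa A ->
      J_positive J (fun a => acc a /\ subset (s a) A).

End Ordinals.

(* Main.v *)
Require Import Defs.
From Stdlib Require Import Classical ClassicalEpsilon ProofIrrelevance Lia.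
Set Implicit Arguments.

Lemma sig_inj (A : Type) (P : A -> Prop) (x y : {a | P a}) :
  proj1_sig x = proj1_sig y -> x = y.
Proof.
  destruct x as [x p], y as [y q]; simpl; intro E; subst; f_equal; apply proof_irrelevance.
Qed.

Lemma lt_irrefl (T : Type) (lt : T -> T -> Prop) :
  strict_wellorder lt -> forall x, ~ lt x x.
Proof.
  intros [_ [_ wf]] x. induction (wf x) as [x _ IH]. intro H. exact (IH x H H).
Qed.

Lemma wf_min (T : Type) (lt : T -> T -> Prop) :
  strict_wellorder lt -> forall P : T -> Prop, (exists x, P x) ->
  exists x, P x /\ forall y, P y -> ~ lt y x.
Proof.
  intros [_ [_ wf]] P [x Hx].
  induction (wf x) as [x _ IH].
  destruct (classic (exists y, P y /\ lt y x)) as [[y [Py ly]] | N].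
  - exact (IH y ly Py).
  - exists x; split; auto. intros y Py ly; apply N; eauto.
Qed.

Lemma image_small (T : Type) (lt : T -> T -> Prop) (I : Type) :
  regular lt -> card_lt I T -> forall h : I -> T, exists b, forall i, lt (h i) b.
Proof.
  intros reg [_ nle] h.
  set (X := fun x => exists i, h i = x).
  assert (HX : card_lt {x | X x} T).
  { split.
    - exists (@proj1_sig _ _). intros; apply sig_inj; auto.
    - intros [phi phinj]. apply nle.
      set (c := fun w : {x | X x} => proj1_sig (constructive_indefinite_description _ (proj2_sig w))).
      assert (hc : forall w, h (c w) = proj1_sig w).
      { intro w. unfold c. destruct (constructive_indefinite_description _ _); auto. }
      exists (fun u => c (phi u)). intros u v E.
      apply phinj. apply sig_inj. rewrite <- !hc, E. reflexivity. }
  destruct (reg X HX) as [b Hb]. exists b. intro i. apply Hb. exists i; auto.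
Qed.

Lemma le_lt_trans (T : Type) (lt : T -> T -> Prop) :
  strict_wellorder lt -> forall x y z, le lt x y -> lt y z -> lt x z.
Proof. intros [tr _] x y z [H|H] H2; [eapply tr; eauto | subst; auto]. Qed.

Lemma lt_le_trans (T : Type) (lt : T -> T -> Prop) :
  strict_wellorder lt -> forall x y z, lt x y -> le lt y z -> lt x z.
Proof. intros [tr _] x y z H [H2|H2]; [eapply tr; eauto | subst; auto]. Qed.

Lemma le_trans' (T : Type) (lt : T -> T -> Prop) :
  strict_wellorder lt -> forall x y z, le lt x y -> le lt y z -> le lt x z.
Proof.
  intros sw x y z H [H2|H2]; [left; eapply le_lt_trans; eauto | subst; auto].
Qed.

Lemma not_lt_le (T : Type) (lt : T -> T -> Prop) :
  strict_wellorder lt -> forall x y, ~ lt x y -> le lt y x.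
Proof.
  intros [_ [tri _]] x y H. destruct (tri x y) as [h|[h|h]].
  - contradiction.
  - right; auto.
  - left; auto.
Qed.

Lemma nomax (T : Type) (lt : T -> T -> Prop) (p : T -> T -> T) (c1 c2 : T) :
  is_cardinal_order lt ->
  (forall u v u' v', p u v = p u' v' -> u = u' /\ v = v') -> c1 <> c2 ->
  forall x, exists y, lt x y.
Proof.
  intros [sw card] pinj c12 x.
  apply NNPP; intro N.
  assert (Hle : forall y, y <> x -> lt y x).
  { intros y ne. destruct (not_lt_le sw x y (fun h => N (ex_intro _ y h))) as [h|h];
    [auto | congruence]. }
  set (psi0 := fun y => if excluded_middle_informative (p y c1 = x) then p y c2 else p y c1).
  assert (Hpsi : forall y, lt (psi0 y) x).
  { intro y. unfold psi0. destruct (excluded_middle_informative _) as [e|e]; apply Hle; auto.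
    intro e2. rewrite <- e2 in e. apply pinj in e. destruct e; auto. }
  destruct (card x) as [_ nle]. apply nle.
  exists (fun y => exist (fun z => lt z x) (psi0 y) (Hpsi y)).
  intros u v E. apply (f_equal (@proj1_sig _ _)) in E. simpl in E. unfold psi0 in E.
  destruct (excluded_middle_informative (p u c1 = x)), (excluded_middle_informative (p v c1 = x));
    apply pinj in E; destruct E; auto; exfalso; auto.
Qed.

Lemma club_closure (T : Type) (lt : T -> T -> Prop) (R : T -> T -> Prop) :
  is_cardinal_order lt -> regular lt -> card_lt nat T ->
  (forall xi, exists b, forall y, R xi y -> lt y b) ->
  club lt (fun d => forall xi y, lt xi d -> R xi y -> lt y d).
Proof.
  intros [sw card] reg cn HR.
  assert (sw' := sw). destruct sw' as [tr [tri wf]].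
  split.
  - intros d [_ accd] H xi y lxi Ry.
    destruct (accd xi lxi) as [g' [l1 l2]].
    destruct (H g' l2) as [g [Cg [lg gd]]].
    apply tr with g; auto. apply (Cg xi y); auto. eapply lt_le_trans; eauto.
  - intro a.
    set (bR := fun xi => proj1_sig (constructive_indefinite_description _ (HR xi))).
    assert (HbR : forall xi y, R xi y -> lt y (bR xi)).
    { intros xi. unfold bR. destruct (constructive_indefinite_description _ _); auto. }
    assert (Hn : forall x, exists m, le lt x m /\ forall xi, lt xi x -> lt (bR xi) m).
    { intro x.
      destruct (image_small reg (card x) (fun w => bR (proj1_sig w))) as [b1 Hb1].
      destruct (classic (lt x b1)) as [h|h].
      - exists b1. split; [left; auto|]. intros xi lx. exact (Hb1 (exist _ xi lx)).
      - exists x. split; [right; auto|]. intros xi lx.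
        eapply lt_le_trans; eauto. exact (Hb1 (exist _ xi lx)). apply not_lt_le; auto. }
    set (nxt := fun x => proj1_sig (constructive_indefinite_description _ (Hn x))).
    assert (Hnxt : forall x, le lt x (nxt x) /\ forall xi, lt xi x -> lt (bR xi) (nxt x)).
    { intro x. unfold nxt. destruct (constructive_indefinite_description _ _); auto. }
    set (sq := fix sq (n : nat) := match n with 0 => a | S n => nxt (sq n) end).
    destruct (image_small reg cn sq) as [b Hb].
    destruct (wf_min sw (fun y => forall n, le lt (sq n) y)) as [d [Ud Md]].
    { exists b. intro n. left; auto. }
    exists d. split; [| exact (Ud 0)].
    intros xi y lxi Ry.
    assert (E : exists n, lt xi (sq n)).
    { apply NNPP; intro N. apply (Md xi); auto. intro n.
      apply not_lt_le; auto. intro h; apply N; eauto. }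
    destruct E as [n ln].
    apply tr with (bR xi); [auto|].
    apply lt_le_trans with (nxt (sq n)); auto.
    exact (proj2 (Hnxt (sq n)) xi ln). exact (Ud (S n)).
Qed.

Lemma nat_small (T : Type) (lt : T -> T -> Prop) (c : T) :
  strict_wellorder lt -> uncountable T -> (forall x, exists y, lt x y) -> card_lt nat T.
Proof.
  intros sw unc nm. split; [|exact unc].
  set (nx := fun x => proj1_sig (constructive_indefinite_description _ (nm x))).
  assert (Hnx : forall x, lt x (nx x)).
  { intro x. unfold nx. destruct (constructive_indefinite_description _ _); auto. }
  set (sq := fix sq (n : nat) := match n with 0 => c | S n => nx (sq n) end).
  assert (inc : forall n k, lt (sq n) (sq (S (k + n)))).
  { intros n k. induction k as [|k IH]; simpl.
    - apply Hnx.
    - destruct sw as [tr _]. apply tr with (sq (S (k + n))); auto; apply Hnx. }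
  exists sq. intros n m E.
  destruct (PeanoNat.Nat.lt_total n m) as [h|[h|h]]; auto; exfalso.
  - assert (m = S ((m - S n) + n)) by lia.
    pose proof (inc n (m - S n)). rewrite <- H, <- E in H0. exact (lt_irrefl sw _ H0).
  - assert (n = S ((n - S m) + m)) by lia.
    pose proof (inc m (n - S m)). rewrite <- H, E in H0. exact (lt_irrefl sw _ H0).
Qed.

Lemma size_unb (T : Type) (lt : T -> T -> Prop) (A : T -> Prop) :
  is_cardinal_order lt -> size_kappa A -> forall a, exists x, A x /\ le lt a x.
Proof.
  intros [sw card] [phi [phinj phisur]] a.
  apply NNPP; intro N.
  assert (H : forall x, A x -> lt x a).
  { intros x Ax. apply NNPP; intro h. apply N. exists x; split; auto. apply not_lt_le; auto. }
  set (psi := fun y => proj1_sig (constructive_indefinite_description _ (phisur y))).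
  assert (Hpsi : forall y, phi (psi y) = y).
  { intro y. unfold psi. destruct (constructive_indefinite_description _ _); auto. }
  destruct (card a) as [_ nle]. apply nle.
  exists (fun y => exist (fun z => lt z a) (proj1_sig (psi y)) (H _ (proj2_sig (psi y)))).
  intros u v E. apply (f_equal (@proj1_sig _ _)) in E. simpl in E.
  apply sig_inj in E. rewrite <- (Hpsi u), <- (Hpsi v), E. reflexivity.
Qed.

Theorem proposition3p16 (T : Type) (lt : T -> T -> Prop) (S : Type)
  (J : (T -> Prop) -> Prop) :
  is_cardinal_order lt -> regular lt -> uncountable T ->
  card_lt unit S -> card_lt S T -> card_eq (S -> T) T ->
  ideal lt J -> kappa_complete J -> NS_subset lt J ->
  clubsuit_minus lt S J ->
  clubsuit lt J.
Proof.
  intros co reg unc uS ST [g [ginj _]] idl kc ns [B [Bcof Bpos]].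
  assert (sw : strict_wellorder lt) by exact (proj1 co).
  assert (sw' := sw). destruct sw' as [tr [tri wf]].
  destruct idl as [_ [_ [_ [Jsub Jun]]]].
  destruct uS as [[u _] nSu]. set (s0 := u tt).
  assert (Hs1 : exists s1, s1 <> s0).
  { apply NNPP; intro N. apply nSu. exists (fun _ => tt). intros x y _.
    transitivity s0; [|symmetry]; apply NNPP; intro h; apply N; eauto. }
  destruct Hs1 as [s1 s10].
  assert (ST' := ST). destruct ST' as [[j jinj] _].
  set (p := fun a b => g (fun s => if excluded_middle_informative (s = s0) then a else b)).
  assert (pinj : forall a b a' b', p a b = p a' b' -> a = a' /\ b = b').
  { intros a b a' b' E. apply ginj in E. split.
    - apply (f_equal (fun h => h s0)) in E.
      destruct (excluded_middle_informative (s0 = s0)); [auto | congruence].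
    - apply (f_equal (fun h => h s1)) in E.
      destruct (excluded_middle_informative (s1 = s0)); [congruence | auto]. }
  assert (c12 : j s0 <> j s1) by (intro E; apply jinj in E; congruence).
  assert (nm := @nomax T lt p (j s0) (j s1) co pinj c12).
  assert (cn := @nat_small T lt (j s0) sw unc nm).
  apply NNPP; intro NC.
  set (s := fun i d y => exists h, B d i (g h) /\ h i = y).
  set (t := fun i d => if excluded_middle_informative (sub_cofinal lt (s i d) d)
                       then s i d else (fun x => lt x d)).
  assert (tcof : forall i d, acc lt d -> sub_cofinal lt (t i d) d).
  { intros i d _. unfold t. destruct (excluded_middle_informative _); auto.
    split; auto. intros b lb. exists b. split; [auto | right; auto]. }
  assert (HA : forall i, exists A, size_kappa A /\ J (fun a => acc lt a /\ subset (t i a) A)).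
  { intro i. apply NNPP; intro N. apply NC. exists (t i). split; [apply tcof|].
    intros A sA hJ. apply N. exists A; split; auto. }
  set (A := fun i => proj1_sig (constructive_indefinite_description _ (HA i))).
  assert (HAp : forall i, size_kappa (A i) /\ J (fun a => acc lt a /\ subset (t i a) (A i))).
  { intro i. unfold A. destruct (constructive_indefinite_description _ _); auto. }
  assert (Aunb : forall i a, exists x, A i x /\ le lt a x).
  { intro i. exact (size_unb co (proj1 (HAp i))). }
  set (f := fun a i => if excluded_middle_informative (i = s0) then a
                       else proj1_sig (constructive_indefinite_description _ (Aunb i a))).
  assert (fge : forall a i, le lt a (f a i)).
  { intros a i. unfold f. destruct (excluded_middle_informative _); [right; auto|].
    destruct (constructive_indefinite_description _ _) as [x hx]; simpl; tauto. }
  assert (fin : forall a i, A s0 a -> A i (f a i)).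
  { intros a i Ha. unfold f. destruct (excluded_middle_informative _); [subst; auto|].
    destruct (constructive_indefinite_description _ _) as [x hx]; simpl; tauto. }
  assert (finj : forall a b, f a = f b -> a = b).
  { intros a b E. apply (f_equal (fun h => h s0)) in E. unfold f in E.
    destruct (excluded_middle_informative (s0 = s0)); [auto | congruence]. }
  set (W := fun xi => exists a, A s0 a /\ g (f a) = xi).
  assert (sizeW : size_kappa W).
  { destruct (proj1 (HAp s0)) as [phi [phinj phisur]].
    set (aw := fun w : {xi | W xi} => constructive_indefinite_description _ (proj2_sig w)).
    assert (Haw : forall w, g (f (proj1_sig (aw w))) = proj1_sig w).
    { intro w. exact (proj2 (proj2_sig (aw w))). }
    exists (fun w => phi (exist (A s0) (proj1_sig (aw w)) (proj1 (proj2_sig (aw w))))).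
    split.
    - intros w w' E. apply phinj in E. apply (f_equal (@proj1_sig _ _)) in E. simpl in E.
      apply sig_inj. rewrite <- (Haw w), <- (Haw w'), E. reflexivity.
    - intro y. destruct (phisur y) as [[a Ha] E].
      exists (exist W (g (f a)) (ex_intro _ a (conj Ha eq_refl))).
      rewrite <- E. f_equal. apply sig_inj. simpl.
      apply finj, ginj. apply (Haw (exist W (g (f a)) (ex_intro _ a (conj Ha eq_refl)))). }
  assert (Ppos := Bpos W sizeW).
  assert (hk : forall xi, exists b, forall a, lt a xi -> lt (g (f a)) b).
  { intro xi. destruct (image_small reg (proj2 co xi) (fun w => g (f (proj1_sig w)))) as [b Hb].
    exists b. intros a la. exact (Hb (exist _ a la)). }
  set (kf := fun xi => proj1_sig (constructive_indefinite_description _ (hk xi))).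
  assert (Hk : forall xi a, lt a xi -> lt (g (f a)) (kf xi)).
  { intro xi. unfold kf. destruct (constructive_indefinite_description _ _); auto. }
  set (R := fun xi y => (exists a, A s0 a /\ g (f a) = xi /\ exists i, f a i = y) \/ y = kf xi).
  assert (HR : forall xi, exists b, forall y, R xi y -> lt y b).
  { intro xi. destruct (classic (exists a, A s0 a /\ g (f a) = xi)) as [[a0 [Ha0 E0]] | N].
    - destruct (image_small reg ST (f a0)) as [b1 Hb1].
      assert (Hm : exists m, le lt b1 m /\ le lt (kf xi) m).
      { destruct (tri b1 (kf xi)) as [h|[h|h]].
        - exists (kf xi). split; [left|right]; auto.
        - exists b1. split; right; auto.
        - exists b1. split; [right|left]; auto. }
      destruct Hm as [m [m1 m2]]. destruct (nm m) as [b lb]. exists b.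
      intros y [[a [Ha [Ea [i Ei]]]] | Ey].
      + rewrite <- E0 in Ea. apply ginj, finj in Ea. subst.
        apply tr with b1; [auto | eapply le_lt_trans; eauto].
      + subst. eapply le_lt_trans; eauto.
    - destruct (nm (kf xi)) as [b lb]. exists b.
      intros y [[a [Ha [Ea _]]] | Ey]; [exfalso; eauto | subst; auto]. }
  set (CR := fun d => forall xi y, lt xi d -> R xi y -> lt y d).
  assert (clubC : club lt CR) by exact (@club_closure T lt R co reg cn HR).
  assert (JN : J (fun x => ~ CR x)).
  { apply ns. exists CR. split; auto. }
  assert (JU : J (fun x => exists i, acc lt x /\ subset (t i x) (A i))).
  { apply (kc S (fun i x => acc lt x /\ subset (t i x) (A i)) ST). intro i. exact (proj2 (HAp i)). }
  apply Ppos. eapply Jsub; [exact (Jun _ _ JN JU)|].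
  intros d [accd [i Hsub]].
  destruct (classic (CR d)) as [Cd | nCd]; [right | left; auto].
  exists i. split; auto.
  destruct (Bcof d i accd) as [Bin Bc].
  assert (decode : forall h, B d i (g h) -> exists a, A s0 a /\ h = f a).
  { intros h Bh. destruct (Hsub _ Bh) as [a [Ha Ea]]. apply ginj in Ea. eauto. }
  assert (key : sub_cofinal lt (s i d) d /\ subset (s i d) (A i)).
  { split; [split|].
    - intros y [h [Bh Ey]]. destruct (decode h Bh) as [a [Ha Eh]]. subst.
      apply (Cd (g (f a)) (f a i)); [apply Bin; auto | left; exists a; eauto].
    - intros b lb.
      assert (kd : lt (kf b) d) by exact (Cd b (kf b) lb (or_intror eq_refl)).
      destruct (Bc (kf b) kd) as [xi [Bxi lxi]].
      destruct (Hsub xi Bxi) as [a [Ha Ea]]. subst xi.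
      exists (f a i). split; [exists (f a); auto|].
      apply le_trans' with a; auto.
      apply not_lt_le; auto. intro la.
      apply (lt_irrefl sw (g (f a))). eapply lt_le_trans; eauto.
    - intros y [h [Bh Ey]]. destruct (decode h Bh) as [a [Ha Eh]]. subst. apply fin; auto. }
  unfold t. destruct (excluded_middle_informative _) as [_|n]; [exact (proj2 key) | exfalso; exact (n (proj1 key))].
Qed.
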